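(* Let $n\ge1$ and let $\mathcal{G}=(\mathcal{V},\mathcal{E})$ be the $4n$-vertex graph with vertex set $\mathcal{V}=\{(b_1,b_2,c):b_1,b_2\in\{0,1\},c\in[n]\}$ and an edge from $(0,b,c)$ to $(1,b',c)$ for every $b,b'\in\{0,1\}$ and $c\in[n]$ (and no other edges). Let $\alpha\ge0$ and let $\mathcal{A}$ be an algorithm that is $(\epsilon,\delta)$-differentially private on $\mathcal{G}$ and that on every input $w:\mathcal{E}\to\{0,1\}$ produces a perfect matching of expected weight at most $\alpha$ greater than the minimum weight of a perfect matching. Then there exists a $(2\epsilon,(1+e^{\epsilon})\delta)$-differentially private algorithm $\mathcal{B}$ which on every input $x\in\{0,1\}^n$ produces $y\in\{0,1\}^n$ with expected Hamming distance to $x$ at most $\alpha$.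
   Context: Private edge weight model: for a graph $\mathcal{G}=(\mathcal{V},\mathcal{E})$, a weight function is $w:\mathcal{E}\to\mathbb{R}$. Two weight functions $w,w'$ are neighboring if $\sum_{e\in\mathcal{E}}|w(e)-w'(e)|\le1$. A randomized algorithm $\mathcal{A}$ on weight functions is $(\epsilon,\delta)$-differentially private on $\mathcal{G}$ if for all neighboring $w,w'$ and all sets $S$ of outputs, $\Pr[\mathcal{A}(w)\in S]\le e^{\epsilon}\Pr[\mathcal{A}(w')\in S]+\delta$. A randomized algorithm $\mathcal{B}$ with inputs in $\{0,1\}^n$ is $(\epsilon',\delta')$-differentially private if for all $x,x'\in\{0,1\}^n$ differing in exactly one coordinate and all sets $S$ of outputs, $\Pr[\mathcal{B}(x)\in S]\le e^{\epsilon'}\Pr[\mathcal{B}(x')\in S]+\delta'$. The weight of a matching is the sum of its edge weights. *)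

(* Defs.v *)
From HB Require Import structures.
From mathcomp Require Import all_boot all_order all_algebra.
From mathcomp Require Import reals sequences exp.
Set Implicit Arguments. Unset Strict Implicit. Unset Printing Implicit Defensive.
Import Order.TTheory GRing.Theory Num.Theory.
Local Open Scope ring_scope.

Definition vert (n : nat) : finType := (bool * bool * 'I_n)%type.
(* Edges are indexed by (b, b', c): the edge from (0,b,c) to (1,b',c). *)
Definition edge (n : nat) : finType := (bool * bool * 'I_n)%type.
Definition esrc n (e : edge n) : vert n := (false, e.1.1, e.2).
Definition edst n (e : edge n) : vert n := (true, e.1.2, e.2).

Definition perfect_matching n (M : {set edge n}) : bool :=
  [forall v : vert n, #|[set e in M | (esrc e == v) || (edst e == v)]| == 1%N].

Definition mweight (R : realType) n (w : edge n -> R) (M : {set edge n}) : R :=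
  \sum_(e in M) w e.

Definition is_dist (R : realType) (T : finType) (p : {ffun T -> R}) : Prop :=
  (forall t, 0 <= p t) /\ \sum_(t : T) p t = 1.

Definition prob (R : realType) (T : finType) (p : {ffun T -> R}) (S : {set T}) : R :=
  \sum_(t in S) p t.

Definition dp_edge (R : realType) n (eps delta : R)
    (A : (edge n -> R) -> {ffun {set edge n} -> R}) : Prop :=
  forall w w' : edge n -> R, \sum_(e : edge n) `|w e - w' e| <= 1 ->
  forall S : {set {set edge n}},
    prob (A w) S <= expR eps * prob (A w') S + delta.

Definition bvec n := {ffun 'I_n -> bool}.

Definition hamming n (x y : bvec n) : nat := #|[set i | x i != y i]|.

Definition dp_bits (R : realType) n (eps delta : R)
    (B : bvec n -> {ffun bvec n -> R}) : Prop :=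
  forall x x' : bvec n, hamming x x' = 1%N ->
  forall S : {set bvec n},
    prob (B x) S <= expR eps * prob (B x') S + delta.

(* Main.v *)
Require Import Defs.
From HB Require Import structures.
From mathcomp Require Import all_boot all_order all_algebra.
From mathcomp Require Import reals sequences exp.
Import Order.TTheory GRing.Theory Num.Theory.
Local Open Scope ring_scope.

Definition wb n (x : bvec n) (e : edge n) : bool :=
  (~~ e.1.1) && (e.1.2 == ~~ x e.2).
Definition dec n (M : {set edge n}) : bvec n :=
  [ffun c => (false, true, c) \in M].
Definition enc n (x : bvec n) : {set edge n} :=
  [set e | (e.1.1 != e.1.2) == x e.2].

Arguments wb {n}. Arguments dec {n}. Arguments enc {n}.

Lemma perf_excl n (M : {set edge n}) c : perfect_matching M ->
  ((false, false, c) \in M) = ((false, true, c) \notin M).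
Proof.
move=> /forallP /(_ (false, false, c)) /eqP H.
case h1: ((false,false,c) \in M); case h2: ((false,true,c) \in M) => //.
- have : (#|[set (false,false,c); (false,true,c)]| <= #|[set e in M | (esrc e == (false,false,c)) || (edst e == (false,false,c))]|)%N.
    apply: subset_leq_card; apply/subsetP => e; rewrite !inE.
    by case/orP => /eqP ->; rewrite ?h1 ?h2 /esrc /edst /= !eqxx.
  by rewrite H cards2.
- move: H; set S := [set e in M | _].
  suff -> : S = set0 by rewrite cards0.
  apply/setP => -[[a a'] c']; rewrite !inE /esrc /edst /= !xpair_eqE /= ?andbF ?orbF.
  case: (eqVneq c' c) => [->|ne]; last by rewrite !andbF.
  by case: a; case: a' => /=; rewrite ?h1 ?h2 ?andbF.
Qed.

Lemma enc_perf n (x : bvec n) : perfect_matching (enc x).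
Proof.
apply/forallP => -[[b1 b2] c]; apply/cards1P.
case: b1.
- exists (addb b2 (x c), b2, c); apply/setP => -[[a a'] c'];
  rewrite !inE /esrc /edst /= !xpair_eqE /=.
  case: (eqVneq c' c) => [->|ne]; last by rewrite !andbF.
  by case: a; case: a'; case: b2; case: (x c).
- exists (b2, addb b2 (x c), c); apply/setP => -[[a a'] c'];
  rewrite !inE /esrc /edst /= !xpair_eqE /=.
  case: (eqVneq c' c) => [->|ne]; last by rewrite !andbF.
  by case: a; case: a'; case: b2; case: (x c).
Qed.

Lemma enc_w0 (R : realType) n (x : bvec n) :
  mweight (fun e => (wb x e)%:R : R) (enc x) = 0.
Proof.
rewrite /mweight big1 // => -[[a a'] c]; rewrite inE /wb /=.
by case: a; case: a'; case: (x c).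
Qed.

Lemma mweight_ham (R : realType) n (x : bvec n) M : perfect_matching M ->
  mweight (fun e => (wb x e)%:R : R) M = (hamming x (dec M))%:R.
Proof.
move=> hM; rewrite /mweight.
rewrite (eq_bigr (fun e => if wb x e then 1 else 0)); last by move=> e _; case: (wb x e).
rewrite -big_mkcondr /=.
rewrite (eq_bigl (mem [set e in M | wb x e])); last by move=> e; rewrite !inE.
rewrite sumr_const /hamming.
have -> : [set e in M | wb x e] = (fun c => (false, ~~ x c, c)) @: [set i | x i != dec M i].
  apply/setP => -[[a a'] c]; apply/idP/idP.
  - rewrite !inE /wb /= => /andP [hin /andP [ha /eqP ha']].
    move/negbTE: ha => ha; subst a a'. apply/imsetP; exists c => //.
    rewrite inE ffunE; move: hin; case: (x c) => /= hin.
    - by rewrite -perf_excl // hin.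
    - by rewrite hin.
  - case/imsetP => c0; rewrite inE ffunE => hne [-> -> ->].
    rewrite !inE /wb /= eqxx andbT.
    move: hne; case: (x c0) => //=; last by rewrite negbK.
    by rewrite perf_excl // => /negbTE ->.
rewrite card_imset ?mulr1n //.
by move=> c1 c2 [].
Qed.

From mathcomp Require Import lra.

Lemma ham_sym n (x y : bvec n) : hamming x y = hamming y x.
Proof. by rewrite /hamming; apply: eq_card => i; rewrite !inE eq_sym. Qed.

Lemma edge_dist (R : realType) n (x x' : bvec n) : hamming x x' = 1%N ->
  \sum_(e : edge n) `|(wb x e)%:R - (wb x e || wb x' e)%:R| <= (1 : R).
Proof.
rewrite /hamming => /eqP /cards1P [c0 hc0].
pose e0 : edge n := (false, ~~ x' c0, c0).
apply: (@le_trans _ _ (\sum_(e : edge n) ((e == e0)%:R : R))).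
  apply: ler_sum => -[[a a'] c] _.
  case h: (wb x' (a, a', c) && ~~ wb x (a, a', c)).
  - move/andP: h => [h1 h2]; rewrite (negbTE h2) h1 /=.
    move: h1 h2; rewrite /wb /= => /andP [ha /eqP ha'] h2.
    move/negbTE: ha => ha; subst a a'.
    have : c \in [set c0].
      by rewrite -hc0 inE; move: h2 => /=; case: (x c); case: (x' c).
    by rewrite inE => /eqP ->; rewrite eqxx sub0r normrN normr1.
  - have -> : (wb x (a, a', c) || wb x' (a, a', c)) = wb x (a, a', c).
      by move: h; case: (wb x _); case: (wb x' _).
    by rewrite subrr normr0.
rewrite (bigD1 e0) //= eqxx big1 ?addr0 // => e /negbTE ->.
by [].
Qed.

Theorem lemmaB5 (R : realType) (n : nat) (hn : (1 <= n)%N)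
    (eps delta alpha : R) (halpha : 0 <= alpha)
    (A : (edge n -> R) -> {ffun {set edge n} -> R})
    (hAdist : forall w, is_dist (A w))
    (hAdp : dp_edge eps delta A)
    (hAperf : forall w : edge n -> bool, forall M,
        A (fun e => (w e)%:R) M != 0 -> perfect_matching M)
    (hAutil : forall w : edge n -> bool, forall M0 : {set edge n},
        perfect_matching M0 ->
        \sum_(M : {set edge n}) A (fun e => (w e)%:R) M
             * mweight (fun e => (w e)%:R) M
          <= mweight (fun e => (w e)%:R) M0 + alpha) :
  exists B : bvec n -> {ffun bvec n -> R},
    (forall x, is_dist (B x)) /\
    dp_bits (2 * eps) ((1 + expR eps) * delta) B /\
    (forall x, \sum_(y : bvec n) B x y * (hamming x y)%:R <= alpha).
Proof.
pose Aw x := A (fun e => (wb x e)%:R).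
exists (fun x => [ffun y => \sum_(M | dec M == y) Aw x M]).
have probB : forall x S, prob [ffun y => \sum_(M | dec M == y) Aw x M] S
   = prob (Aw x) [set M | dec M \in S].
  move=> x S; rewrite /prob.
  rewrite (partition_big (fun M => dec M) (mem S)); last by move=> M; rewrite inE.
  apply: eq_bigr => y yS; rewrite ffunE; apply: eq_bigl => M.
  by rewrite inE; case: (eqVneq (dec M) y) => [->|]; rewrite ?yS ?andbF.
split; [|split].
- move=> x; split.
    move=> y; rewrite ffunE; apply: sumr_ge0 => M _.
    by case: (hAdist (fun e => (wb x e)%:R)) => h _; apply: h.
  case: (hAdist (fun e => (wb x e)%:R)) => _ <-.
  rewrite [RHS](partition_big (fun M => dec M) predT) //.
  by apply: eq_bigr => y _; rewrite ffunE.
- move=> x x' hxx' S; rewrite !probB.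
  set T := [set M | dec M \in S].
  pose wm := fun e : edge n => ((wb x e || wb x' e)%:R : R).
  have h1 := hAdp _ wm (@edge_dist R n x x' hxx') T.
  have h2 : \sum_(e : edge n) `|wm e - (wb x' e)%:R| <= 1.
    rewrite (eq_bigr (fun e => `|(wb x' e)%:R - (wb x' e || wb x e)%:R|)).
      by apply: (@edge_dist R n x' x); rewrite ham_sym.
    by move=> e _; rewrite distrC /wm orbC.
  have h3 := hAdp _ _ h2 T.
  have E0 := expR_ge0 eps.
  have h4 : expR eps * prob (A wm) T <= expR eps * (expR eps * prob (Aw x') T + delta).
    by apply: ler_wpM2l.
  have -> : 2 * eps = eps + eps by lra.
  rewrite expRD. rewrite /Aw in h4 *. nra.
- move=> x.
  have hut := hAutil (wb x) (enc x) (@enc_perf n x).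
  rewrite (@enc_w0 R n x) add0r in hut.
  apply: le_trans hut; rewrite le_eqVlt; apply/orP; left; apply/eqP.
  under eq_bigr => y _ do rewrite ffunE mulr_suml.
  rewrite [RHS](partition_big (fun M => dec M) predT) //.
  apply: eq_bigr => y _; apply: eq_bigr => M /eqP <-.
  case: (eqVneq (A (fun e => (wb x e)%:R) M) 0) => [-> | h]; first by rewrite !mul0r.
  by rewrite (@mweight_ham R n x M) //; apply: hAperf h.
Qed.
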